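(* Let $s\in\mathcal{Q}=\mathbb{Q}^{\geq0}\cup\{\infty\}$, written $s=q/p$ with $p,q\in\mathbb{N}$ coprime ($\infty=1/0$). Then $P^s_{p-1}\in J_s$ and $Q^s_{q-1}\in J_s$, and $$J_s=\left\langle\{P^s_i\mid 0\leq i<p\}\cup\{Q^s_j\mid 0\leq j<q\}\right\rangle_s .$$
   Context: $J_s=\{(\alpha,\beta)\in\mathbb{Z}^2:\ \alpha\equiv q,\ \beta\equiv p \pmod 2;\ \alpha\geq-q;\ \beta\geq-p;\ \alpha+\beta\leq p+q-2;\ p\alpha+q\beta\geq0\}$. $Z_s=(q,p)+2\mathbb{Z}^2$. $P^s_i=(q+2i,-p)$ and $Q^s_j=(-q,p+2j)$ for $i,j\in\mathbb{Z}$. For $U\subset Z_s$, $\langle U\rangle_s$ denotes the intersection with $Z_s$ of the convex hull of $U$ in $\mathbb{R}^2$. *)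

(* Defs.v *)
From HB Require Import structures.
From mathcomp Require Import all_boot all_order all_algebra.
From mathcomp Require Import reals.
Set Implicit Arguments. Unset Strict Implicit. Unset Printing Implicit Defensive.
Import Order.TTheory GRing.Theory Num.Theory.
Local Open Scope ring_scope.

(* Lattice points of Z^2 are pairs of integers. s = q/p with p q : nat coprime
   (p = 0, q = 1 encodes s = oo; q = 0, p = 1 encodes s = 0). *)

Definition J_s (p q : nat) (x : int * int) : Prop :=
  let a := x.1 in let b := x.2 in
  [/\ (2 %| a - q%:Z)%Z /\ (2 %| b - p%:Z)%Z,
      - (q%:Z) <= a, - (p%:Z) <= b,
      a + b <= p%:Z + q%:Z - 2
    & 0 <= p%:Z * a + q%:Z * b].

Definition Z_s (p q : nat) (x : int * int) : Prop :=
  (2 %| x.1 - q%:Z)%Z /\ (2 %| x.2 - p%:Z)%Z.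

Definition P_s (p q : nat) (i : int) : int * int := (q%:Z + 2 * i, - (p%:Z)).
Definition Q_s (p q : nat) (j : int) : int * int := (- (q%:Z), p%:Z + 2 * j).

Definition in_conv_hull (R : realType) (U : seq (int * int)) (x : int * int) : Prop :=
  exists w : 'I_(size U) -> R,
    [/\ forall k, 0 <= w k,
        \sum_(k < size U) w k = 1,
        \sum_(k < size U) w k * ((nth (0,0) U k).1)%:~R = (x.1)%:~R
      & \sum_(k < size U) w k * ((nth (0,0) U k).2)%:~R = (x.2)%:~R].

Definition hull_s (R : realType) (p q : nat) (U : seq (int * int)) (x : int * int) : Prop :=
  Z_s p q x /\ in_conv_hull R U x.

Definition gens_s (p q : nat) : seq (int * int) :=
  [seq P_s p q i%:Z | i <- iota 0 p] ++ [seq Q_s p q j%:Z | j <- iota 0 q].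

(* Main.v *)
Require Import Defs.
From HB Require Import structures.
From mathcomp Require Import all_boot all_order all_algebra.
From mathcomp Require Import reals.
From mathcomp Require Import zify ring lra.
Import Order.TTheory GRing.Theory Num.Theory.
Local Open Scope ring_scope.

Lemma coprime_pos (p q : nat) : coprime p q -> (1 <= p + q)%N.
Proof. by case: p => [|p]; case: q => [|q] //=; rewrite /coprime gcdn0. Qed.

Lemma size_gens p q : size (gens_s p q) = (p + q)%N.
Proof. by rewrite /gens_s size_cat !size_map !size_iota. Qed.

Lemma nth_gens p q (k : nat) : (k < p + q)%N ->
  nth (0,0) (gens_s p q) k =
  if (k < p)%N then P_s p q k%:Z else Q_s p q (k - p)%N%:Z.
Proof.
move=> hk; rewrite /gens_s nth_cat size_map size_iota.
case: ifP => hkp.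
  by rewrite (nth_map 0%N) ?size_iota // nth_iota.
rewrite (nth_map 0%N) ?size_iota; last by lia.
by rewrite nth_iota //; lia.
Qed.

Lemma sum_pick (R : realType) n (i : nat) (c : R) (F : nat -> R) : (i < n)%N ->
  \sum_(k < n) (if (k : nat) == i then c else 0) * F k = c * F i.
Proof.
move=> hi; rewrite (bigD1 (Ordinal hi)) //= eqxx big1 ?addr0 // => k hk.
by rewrite ifN ?mul0r //; apply: contra hk => /eqP h; apply/eqP/val_inj.
Qed.

Lemma sum_pick4 (R : realType) n (i1 i2 i3 i4 : nat) (c1 c2 c3 c4 : R) (F : nat -> R) :
  (i1 < n)%N -> (i2 < n)%N -> (i3 < n)%N -> (i4 < n)%N ->
  \sum_(k < n) ((if (k : nat) == i1 then c1 else 0) + (if (k : nat) == i2 then c2 else 0)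
     + (if (k : nat) == i3 then c3 else 0) + (if (k : nat) == i4 then c4 else 0)) * F k
  = c1 * F i1 + c2 * F i2 + c3 * F i3 + c4 * F i4.
Proof.
move=> h1 h2 h3 h4.
rewrite -(sum_pick R n i1 c1 F h1) -(sum_pick R n i2 c2 F h2)
  -(sum_pick R n i3 c3 F h3) -(sum_pick R n i4 c4 F h4) -!big_split.
by apply: eq_bigr => k _; rewrite !mulrDl.
Qed.

Lemma natzR (R : realType) (n : nat) : ((n%:Z)%:~R : R) = n%:R.
Proof. by []. Qed.

Lemma weights (R : realType) (P Q v u : R) : 1 <= P -> 1 <= Q -> 0 <= v -> 0 <= u ->
  v + u <= 2 * (P + Q - 1) -> 2 * P * Q <= P * v + Q * u ->
  exists wA wB wC wD th : R,
    [/\ 0 <= wA, 0 <= wB, 0 <= wC, 0 <= wD &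
     [/\ wA + wB = th, wC + wD = 1 - th, wB * (2 * P - 2) = v - 2 * Q * th
       & wC * (2 * Q - 2) = u - 2 * P * (1 - th)]].
Proof.
move=> hP hQ hv hu hs hl.
set N := P + Q - 1.
have hNe : N = P + Q - 1 by [].
clearbody N.
have hN : 0 < N by lra.
have [th [h1 h2 h3 h4]] : exists th : R,
    [/\ v <= 2 * N * th, 2 * P - u <= 2 * P * th, 2 * Q * th <= v
      & 2 * N * th <= 2 * N - u].
  have [hc|hc] := lerP (N * (2 * P - u)) (P * v).
  - exists (v / (2 * N)).
    have e : 2 * N * (v / (2 * N)) = v by rewrite mulrC divfK //; lra.
    have ht : 0 <= v / (2 * N) by rewrite divr_ge0 //; lra.
    move: (v / (2 * N)) e ht => t e ht.
    split.
    + lra.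
    + have : 0 <= N * (2 * P * t - (2 * P - u)).
        have e2 : P * v = N * (2 * P * t) by rewrite -e; ring.
        lra.
      rewrite pmulr_rge0 //; lra.
    + have := mulr_ge0 (x := P - 1) (y := t) ltac:(lra) ht.
      rewrite hNe in e; lra.
    + lra.
  - exists (1 - u / (2 * P)).
    have e : 2 * P * (u / (2 * P)) = u by rewrite mulrC divfK //; lra.
    move: (u / (2 * P)) e => t e.
    have hP0 : 0 < P by lra.
    split.
    + have : 0 < P * (2 * N * (1 - t) - v).
        have e2 : N * (2 * P - u) = P * (2 * N * (1 - t)) by rewrite -e; ring.
        lra.
      rewrite pmulr_rgt0 //; lra.
    + lra.
    + have : 0 <= P * (v - 2 * Q * (1 - t)).
        have e2 : Q * (2 * P - u) = P * (2 * Q * (1 - t)) by rewrite -e; ring.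
        lra.
      rewrite pmulr_rge0 //; lra.
    + have : 0 <= P * (2 * N * t - u).
        have e2 : N * u = P * (2 * N * t) by rewrite -e; ring.
        have := mulr_ge0 (x := N - P) (y := u) ltac:(lra) hu.
        lra.
      rewrite pmulr_rge0 //; lra.
have hth0 : 0 <= th by nra.
have hth1 : th <= 1 by nra.
pose wB := (v - 2 * Q * th) / (2 * P - 2).
pose wC := (u - 2 * P * (1 - th)) / (2 * Q - 2).
have hB : 0 <= wB by rewrite /wB divr_ge0 //; nra.
have hC : 0 <= wC by rewrite /wC divr_ge0 //; nra.
have eB : wB * (2 * P - 2) = v - 2 * Q * th.
  have [e|ne] := eqVneq (2 * P - 2) 0.
    rewrite e mulr0; have eP : P = 1 by lra.
    rewrite hNe eP in h1; nra.
  by rewrite /wB divfK.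
have eC : wC * (2 * Q - 2) = u - 2 * P * (1 - th).
  have [e|ne] := eqVneq (2 * Q - 2) 0.
    rewrite e mulr0; have eQ : Q = 1 by lra.
    rewrite hNe eQ in h4; nra.
  by rewrite /wC divfK.
have hBt : wB <= th.
  case: (lerP P 1) => hP1.
    have eP : 2 * P - 2 = 0 by lra.
    by rewrite /wB eP invr0 mulr0.
  rewrite /wB ler_pdivrMr; last lra.
  rewrite hNe in h1; nra.
have hCt : wC <= 1 - th.
  case: (lerP Q 1) => hQ1.
    have eQ : 2 * Q - 2 = 0 by lra.
    by rewrite /wC eQ invr0 mulr0; lra.
  rewrite /wC ler_pdivrMr; last lra.
  rewrite hNe in h4; nra.
exists (th - wB), wB, wC, (1 - th - wC), th.
split; try lra.
split; try lra.
Qed.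

Lemma gens_J p q (k : nat) : (k < p + q)%N -> J_s p q (nth (0,0) (gens_s p q) k).
Proof.
move=> hk; rewrite nth_gens //; case: ifP => hkp; rewrite /J_s /P_s /Q_s /=;
  (repeat split); nia.
Qed.

Lemma hull_ineq (R : realType) p q (w : 'I_(size (gens_s p q)) -> R) (al be c : R) :
  (forall k, 0 <= w k) -> \sum_(k < size (gens_s p q)) w k = 1 ->
  (forall k, (k < p + q)%N -> c <= al * ((nth (0,0) (gens_s p q) k).1)%:~R
                                  + be * ((nth (0,0) (gens_s p q) k).2)%:~R) ->
  c <= al * (\sum_(k < size (gens_s p q)) w k * ((nth (0,0) (gens_s p q) k).1)%:~R)
     + be * (\sum_(k < size (gens_s p q)) w k * ((nth (0,0) (gens_s p q) k).2)%:~R).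
Proof.
move=> hw hs hk.
rewrite !mulr_sumr -big_split /=.
have -> : c = \sum_(k < size (gens_s p q)) w k * c by rewrite -mulr_suml hs mul1r.
apply: ler_sum => k _.
have -> : al * (w k * ((nth (0,0) (gens_s p q) k).1)%:~R) +
          be * (w k * ((nth (0,0) (gens_s p q) k).2)%:~R) =
          w k * (al * ((nth (0,0) (gens_s p q) k).1)%:~R +
                 be * ((nth (0,0) (gens_s p q) k).2)%:~R) by ring.
apply: ler_wpM2l => //; apply: hk.
by rewrite -size_gens.
Qed.

Theorem lemma4 (R : realType) (p q : nat) (hpq : coprime p q) :
  [/\ J_s p q (P_s p q (p%:Z - 1)),
      J_s p q (Q_s p q (q%:Z - 1))
    & forall x : int * int, J_s p q x <-> hull_s R p q (gens_s p q) x].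
Proof.
have hpq1 := coprime_pos _ _ hpq.
split.
- rewrite /J_s /P_s /=; (repeat split); nia.
- rewrite /J_s /Q_s /=; (repeat split); nia.
move=> [a b]; split; last first.
  move=> [hz [w [hw hs hx hy]]].
  have G : forall (al be : int) (c : int),
      (forall k, (k < p + q)%N -> c <= al * (nth (0,0) (gens_s p q) k).1
                                     + be * (nth (0,0) (gens_s p q) k).2) ->
      c <= al * a + be * b.
    move=> al be c hk; rewrite -(ler_int R) !intrD !intrM /= -hx -hy.
    apply: hull_ineq => // k hk'.
    by rewrite -!intrM -intrD ler_int; apply: hk.
  case: hz => hz1 hz2.
  split => //=.
  - suff : - q%:Z <= 1 * a + 0 * b by lia.
    apply: G => k /(gens_J p q k) [_ h1 h2 h3 h4]; move: h1 h2 h3 h4; case: (nth _ _ k) => x y /= *; lia.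
  - suff : - p%:Z <= 0 * a + 1 * b by lia.
    apply: G => k /(gens_J p q k) [_ h1 h2 h3 h4]; move: h1 h2 h3 h4; case: (nth _ _ k) => x y /= *; lia.
  - suff : - (p%:Z + q%:Z - 2) <= (-1) * a + (-1) * b by lia.
    apply: G => k /(gens_J p q k) [_ h1 h2 h3 h4]; move: h1 h2 h3 h4; case: (nth _ _ k) => x y /= *; lia.
  - apply: G => k /(gens_J p q k) [_ h1 h2 h3 h4]; move: h1 h2 h3 h4; case: (nth _ _ k) => x y /= *; lia.
rewrite /J_s /= => -[[hpa hpb] ha hb hab hl].
split; first by split.
rewrite /in_conv_hull /=.
have [p0|pp] := posnP p.
  subst p; move: hpq; rewrite /coprime gcd0n => /eqP q1; subst q.
  have [-> ->] : a = -1 /\ b = 0 by lia.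
  exists (fun _ => 1); rewrite /= !big_ord1 /=; split => //; rewrite mul1r; congr (_%:~R); lia.
have [q0|qp] := posnP q.
  subst q; move: hpq; rewrite /coprime gcdn0 => /eqP p1; subst p.
  have [-> ->] : a = 0 /\ b = -1 by lia.
  exists (fun _ => 1); rewrite /= !big_ord1 /=; split => //; rewrite mul1r; congr (_%:~R); lia.
have b1 : (0 < p + q)%N by lia.
have b2 : (p.-1 < p + q)%N by lia.
have b3 : (p < p + q)%N by lia.
have b4 : ((p + q).-1 < p + q)%N by lia.
have e1 : (p.-1 < p)%N by lia.
have e2 : ((p + q).-1 < p)%N = false by lia.
have e3 : ((p + q).-1 - p)%N = q.-1 by lia.
set P : R := p%:R; set Q : R := q%:R.
have hP1 : 1 <= P by rewrite /P ler1n.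
have hQ1 : 1 <= Q by rewrite /Q ler1n.
have rA : - Q <= a%:~R by rewrite /Q -natzR -intrN ler_int.
have rB : - P <= b%:~R by rewrite /P -natzR -intrN ler_int.
have rS : a%:~R + b%:~R <= P + Q - 2.
  have := hab; rewrite -(ler_int R) !intrD !intrN !natzR -/P -/Q.
  move=> h; apply: (le_trans h); lra.
have rL : 0 <= P * a%:~R + Q * b%:~R.
  by have := hl; rewrite -(ler_int R) intrD !intrM !natzR.
have [wA [wB [wC [wD [th [hwA hwB hwC hwD [eAB eCD eB eC]]]]]]] :=
  weights R P Q (a%:~R + Q) (b%:~R + P) hP1 hQ1 ltac:(lra) ltac:(lra) ltac:(lra) ltac:(nra).
have two : (1 + 1)%:R = 2 :> R by [].
have eP1 : (p.-1)%:R = P - 1 :> R by rewrite /P -[in RHS](prednK pp) -addn1 natrD addrK.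
have eQ1 : (q.-1)%:R = Q - 1 :> R by rewrite /Q -[in RHS](prednK qp) -addn1 natrD addrK.
pose W (k : nat) : R := (if k == 0%N then wA else 0) + (if k == p.-1 then wB else 0)
   + (if k == p then wD else 0) + (if k == (p + q).-1 then wC else 0).
have key : forall F : nat -> R, \sum_(k < size (gens_s p q)) W k * F k =
    wA * F 0%N + wB * F p.-1 + wD * F p + wC * F (p + q).-1.
  move=> F; rewrite size_gens; exact: (sum_pick4 R (p + q) 0 p.-1 p (p + q).-1 wA wB wD wC F b1 b2 b3 b4).
exists (fun k => W k); split.
- have h0 : forall (c : R) (bb : bool), 0 <= c -> 0 <= (if bb then c else 0).
    by move=> c [].
  by move=> k; rewrite /W !addr_ge0 ?h0.
- transitivity (\sum_(k < size (gens_s p q)) W k * 1).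
    by apply: eq_bigr => k _; rewrite mulr1.
  rewrite (key (fun _ => 1)); lra.
- rewrite (key (fun k => ((nth (0,0) (gens_s p q) k).1)%:~R)) !nth_gens //.
  rewrite pp e1 ltnn e2 subnn e3 /P_s /Q_s /= !intrD !intrM !intrN !natzR.
  rewrite two eP1 -/Q mulr0 addr0.
  have := congr1 (fun x => Q * x) eAB; have := congr1 (fun x => Q * x) eCD => /= h1 h2.
  lra.
- rewrite (key (fun k => ((nth (0,0) (gens_s p q) k).2)%:~R)) !nth_gens //.
  rewrite pp e1 ltnn e2 subnn e3 /P_s /Q_s /= !intrD !intrM !intrN !natzR.
  rewrite two eQ1 -/P mulr0 addr0.
  have := congr1 (fun x => P * x) eAB; have := congr1 (fun x => P * x) eCD => /= h1 h2.
  lra.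
Qed.
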